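(* Let $R$ be a commutative ring with identity. Then $R$ satisfies Property $D$ if and only if the polynomial ring $R[x]$ satisfies Property $D$.
   Context: A ring $A$ satisfies Property $D$ if $A\setminus\mathfrak{N}(A)=\mathrm{reg}(A)$, where $\mathfrak{N}(A)$ is the nilradical and $\mathrm{reg}(A)$ the set of regular elements (non-zero-divisors). *)

(* Defs.v *)
From mathcomp Require Import all_boot all_algebra.
Set Implicit Arguments. Unset Strict Implicit. Unset Printing Implicit Defensive.
Import GRing.Theory.
Local Open Scope ring_scope.

Definition nilpotent_elt (A : comNzRingType) (x : A) : Prop :=
  exists n : nat, x ^+ n = 0.

Definition regular_elt (A : comNzRingType) (x : A) : Prop :=
  forall y : A, x * y = 0 -> y = 0.

Definition PropertyD (A : comNzRingType) : Prop :=
  forall x : A, ~ nilpotent_elt x <-> regular_elt x.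

(* Main.v *)
Require Import Defs.
From mathcomp Require Import all_boot all_algebra.
From Stdlib Require Import Classical.
From mathcomp Require Import zify.
Set Implicit Arguments. Unset Strict Implicit. Unset Printing Implicit Defensive.
Import GRing.Theory.
Local Open Scope ring_scope.

Lemma reg_not_nil (A : comNzRingType) (x : A) : regular_elt x -> ~ nilpotent_elt x.
Proof.
move=> Hr [n]; elim: n => [|n IH]; first by rewrite expr0; apply/eqP; exact: oner_neq0.
by rewrite exprS => /Hr.
Qed.

Lemma exp_ge0 (A : comNzRingType) (x : A) m k : x ^+ m = 0 -> (m <= k)%N -> x ^+ k = 0.
Proof. by move=> H /subnKC <-; rewrite exprD H mul0r. Qed.

Lemma nilD (A : comNzRingType) (x y : A) :
  nilpotent_elt x -> nilpotent_elt y -> nilpotent_elt (x + y).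
Proof.
move=> [m Hm] [n Hn]; exists (m + n)%N; rewrite exprDn.
apply: big1 => /= i _.
case: (leqP n i) => Hi.
  by rewrite (exp_ge0 Hn Hi) mulr0 mul0rn.
have Hle : (m <= m + n - i)%N by rewrite -addnBA ?leq_addr // ltnW.
by rewrite (exp_ge0 Hm Hle) mul0r mul0rn.
Qed.

Lemma nil_poly (R : comNzRingType) (f : {poly R}) :
  (forall k, nilpotent_elt f`_k) -> nilpotent_elt f.
Proof.
move=> H; rewrite -[f]coefK poly_def.
apply: (big_ind (fun p : {poly R} => nilpotent_elt p)).
- by exists 1%N; rewrite expr1.
- exact: nilD.
move=> i _; have [n Hn] := H i; exists n.
by rewrite -[_ *: _]mul_polyC exprMn -polyC_exp Hn mul0r.
Qed.

Lemma mccoy (R : comNzRingType) (f g : {poly R}) :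
  g != 0 -> f * g = 0 -> exists2 c : R, c != 0 & forall k, c * f`_k = 0.
Proof.
move: {2}(size g) (leqnn (size g)) => n; elim: n g => [|n IHn] g Hs Hg Hfg.
  by move: Hs; rewrite leqn0 size_poly_eq0 (negPf Hg).
suff: forall m, (forall p, (m <= p)%N -> f`_p *: g = 0) ->
    exists2 c : R, c != 0 & forall k, c * f`_k = 0.
  move=> /(_ (size f)); apply => p Hp.
  by move/leq_sizeP: (leqnn (size f)) => /(_ p Hp) ->; rewrite scale0r.
have Hsg : size g = (size g).-1.+1 by rewrite prednK // lt0n size_poly_eq0.
set d := (size g).-1 in Hsg *.
elim=> [|m IHm] Hm.
  exists (lead_coef g); first by rewrite lead_coef_eq0.
  move=> k; have := congr1 (fun p : {poly R} => p`_d) (Hm k (leq0n k)).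
  by rewrite coefZ coef0 mulrC.
case: (eqVneq (f`_m *: g) 0) => Hz.
  apply: IHm => p; rewrite leq_eqVlt => /orP[/eqP <-|]; first by [].
  exact: Hm.
apply: (IHn (f`_m *: g)) => //; last first.
  by rewrite -scalerAr Hfg scaler0.
have Hc : f`_m * g`_d = 0.
  have := congr1 (fun p : {poly R} => p`_(m + d)) Hfg; rewrite coefM coef0.
  rewrite (bigD1 (Ordinal (ltn_addr d (ltnSn m)))) //= addKn big1 ?addr0 //.
  move=> [j Hj] /= Hjm.
  case: (ltngtP j m) => Hjm'; last by move: Hjm; rewrite -val_eqE /= Hjm' eqxx.
    have -> : g`_(m + d - j) = 0.
      move/leq_sizeP: (leqnn (size g)) => -> //.
      rewrite Hsg; lia.
    by rewrite mulr0.
  have := congr1 (fun p : {poly R} => p`_(m + d - j)) (Hm j Hjm').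
  by rewrite coefZ coef0.
have : (size (f`_m *: g) <= d)%N.
  apply/leq_sizeP => j; rewrite leq_eqVlt => /orP[/eqP <-|Hj].
    by rewrite coefZ.
  by rewrite coefZ; move/leq_sizeP: (leqnn (size g)) => ->; rewrite ?mulr0 // Hsg.
by move=> H; lia.
Qed.

Theorem mainTheorem14 (R : comNzRingType) :
  PropertyD R <-> PropertyD {poly R}.
Proof.
split=> HD x; (split; [| exact: reg_not_nil]).
- move=> Hn y Hy; case: (eqVneq y 0) => // Hy0.
  have [c Hc0 Hc] := mccoy Hy0 Hy.
  exfalso; apply: Hn; apply: nil_poly => k.
  apply: NNPP => Hk; have := proj1 (HD _) Hk c; rewrite mulrC Hc => /(_ erefl).
  by move/eqP; rewrite (negPf Hc0).
- move=> Hn y Hy.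
  have Hn' : ~ nilpotent_elt (x%:P).
    move=> [n]; rewrite -polyC_exp => /eqP; rewrite polyC_eq0 => /eqP H.
    by apply: Hn; exists n.
  have := proj1 (HD _) Hn' y%:P; rewrite -polyCM Hy => /(_ erefl) /eqP.
  by rewrite polyC_eq0 => /eqP.
Qed.
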